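(* Let $G=S_n$ and $H=S_b\wr S_a$ (the stabiliser of a partition of $\{1,\dots,n\}$ into $a$ blocks of size $b$), where $n=ab$, $a=b+1$ and $b\geqslant 3$. Then $b(G,H)=3$.
   Context: For a subgroup $H\leqslant G$, $H_G=\bigcap_{g\in G}H^g$ is the core of $H$, and $b(G,H)=\min\{|S| : S\subseteq G,\ \bigcap_{g\in S}H^g=H_G\}$. Equivalently here, $b(G,H)$ is the minimal number of partitions of $\{1,\dots,n\}$ into $a$ parts of size $b$ whose common stabiliser in $S_n$ is trivial. *)

(* Defs.v *)
From mathcomp Require Import all_boot all_fingroup.
Set Implicit Arguments. Unset Strict Implicit. Unset Printing Implicit Defensive.


Definition core (gT : finGroupType) (G H : {set gT}) : {set gT} :=
  \bigcap_(g in G) (H :^ g)%g.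

(* S is a subset of G realising the core: \bigcap_{g in S} H^g = H_G.
   b(G,H) is the least cardinality of such an S. *)
Definition is_base_set (gT : finGroupType) (G H S : {set gT}) : Prop :=
  S \subset G /\ \bigcap_(g in S) (H :^ g)%g = core G H.

Definition std_partition (n a b : nat) : {set {set 'I_n}} :=
  [set [set i : 'I_n | i %/ b == k] | k : 'I_a].

Definition partition_stab (n : nat) (P : {set {set 'I_n}}) : {set {perm 'I_n}} :=
  [set g : {perm 'I_n} | [set (fun x => g x) @: B | B : {set 'I_n} in P] == P].

(* Main.v *)
Require Import Defs.
From mathcomp Require Import all_boot all_fingroup.
From mathcomp Require Import zify.
Set Implicit Arguments. Unset Strict Implicit. Unset Printing Implicit Defensive.

Section Stab.
Variables (n a b : nat).
Hypotheses (hn : n = (a * b)%N) (hb : 0 < b).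

Definition Blk (k : nat) : {set 'I_n} := [set i : 'I_n | i %/ b == k].

Lemma kb_lt (k : 'I_a) : k * b < n.
Proof. by rewrite hn ltn_pmul2r. Qed.

Lemma divb_lt (u : 'I_n) : u %/ b < a.
Proof. by rewrite ltn_divLR // -hn. Qed.

Lemma stabP (h : {perm 'I_n}) :
  reflect (forall u v : 'I_n, (u %/ b == v %/ b) = (h u %/ b == h v %/ b))
          (h \in partition_stab (std_partition n a b)).
Proof.
rewrite inE /std_partition.
apply: (iffP eqP) => [H u v | pres].
- have memP (w : 'I_n) : exists k : 'I_a, [set h x | x in Blk (w %/ b)] = Blk k.
    have : [set h x | x in Blk (w %/ b)] \in [set [set h x | x in B] | B : {set 'I_n} in
       [set [set i : 'I_n | i %/ b == k] | k : 'I_a]].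
      apply: imset_f. by apply/imsetP; exists (Ordinal (divb_lt w)).
    by rewrite H => /imsetP [k _ ->]; exists k.
  have hin (w : 'I_n) k : [set h x | x in Blk (w %/ b)] = Blk k -> h w %/ b = k.
    move=> E; have : h w \in [set h x | x in Blk (w %/ b)].
      by apply: imset_f; rewrite inE.
    by rewrite E inE => /eqP.
  have [k1 E1] := memP u; have [k2 E2] := memP v.
  rewrite (hin _ _ E1) (hin _ _ E2).
  apply/eqP/eqP => [E | E].
    rewrite E in E1.
    by rewrite -(hin v k1 E1) (hin v k2 E2).
  have : Blk (u %/ b) = Blk (v %/ b).
    apply: (@imset_inj _ _ h (@perm_inj _ h)). rewrite /= E1 E2. by rewrite E.
  move=> EB; have : u \in Blk (u %/ b) by rewrite inE.
  by rewrite EB inE => /eqP.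
- apply/eqP; rewrite eqEcard; apply/andP; split; last first.
    rewrite (@card_imset _ _ (fun B : {set 'I_n} => [set h x | x in B])) // => B1 B2; apply: (@imset_inj _ _ (fun x => h x)).
    exact: perm_inj.
  apply/subsetP => C /imsetP [B /imsetP [k _ ->] ->].
  pose x0 := Ordinal (kb_lt k).
  apply/imsetP; exists (Ordinal (divb_lt (h x0))) => //.
  apply/setP => y; rewrite inE /=.
  have x0b : x0 %/ b = k by rewrite /= mulnK.
  apply/imsetP/idP => [[x] | ].
    by rewrite inE => xk ->; rewrite -pres x0b.
  move=> Hy; exists ((h^-1)%g y); last by rewrite permKV.
  by rewrite inE -x0b pres permKV.
Qed.

Lemma conjP (h g : {perm 'I_n}) :
  reflect (forall u v : 'I_n, ((g^-1)%g u %/ b == (g^-1)%g v %/ b) =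
                               ((g^-1)%g (h u) %/ b == (g^-1)%g (h v) %/ b))
          (h \in partition_stab (std_partition n a b) :^ g)%g.
Proof.
rewrite mem_conjg.
apply: (iffP (stabP _)) => H u v.
  by have := H ((g^-1)%g u) ((g^-1)%g v); rewrite /conjg invgK !permM !permKV.
by have := H (g u) (g v); rewrite /conjg invgK !permM !permK.
Qed.

End Stab.

Section Upper.
Variables (b n : nat).
Hypotheses (hb : 3 <= b) (hn : n = (b.+1 * b)%N).

Lemma b_pos : 0 < b. Proof. by apply: leq_trans hb. Qed.
Lemma n_pos : 0 < n. Proof. by rewrite hn muln_gt0 b_pos. Qed.
Definition o0 : 'I_n := Ordinal n_pos.

Definition R (u : 'I_n) := u %/ b.
Lemma R_lt u : R u < b.+1. Proof. by rewrite /R ltn_divLR ?b_pos // -hn. Qed.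
Lemma u_eq (u : 'I_n) : val u = R u * b + u %% b. Proof. exact: divn_eq. Qed.

Definition x k := if k < b then k * b else b * b + 1.
Lemma x_div k : k < b.+1 -> x k %/ b = k.
Proof.
rewrite /x ltnS leq_eqVlt => /orP [/eqP-> | ->]; last by rewrite mulnK ?b_pos.
by rewrite ltnn divnMDl ?b_pos // divn_small ?addn0 // (leq_trans _ hb).
Qed.
Lemma x_mod k : x k %% b = if k < b then 0 else 1.
Proof.
rewrite /x; case: ifP => _; first by rewrite modnMl.
by rewrite modnMDl modn_small // (leq_trans _ hb).
Qed.
Lemma x_lt k : k < b.+1 -> x k < n.
Proof.
rewrite hn /x ltnS leq_eqVlt => /orP [/eqP-> | kb]; first by rewrite ltnn; nia.
by rewrite kb ltn_pmul2r ?b_pos // ltnW.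
Qed.

Definition xo k : 'I_n := insubd o0 (x k).
Lemma xoE k : k < b.+1 -> val (xo k) = x k.
Proof. by move=> kb; rewrite val_insubd x_lt. Qed.
Lemma R_xo k : k < b.+1 -> R (xo k) = k.
Proof. by move=> kb; rewrite /R xoE // x_div. Qed.

Definition inX (u : 'I_n) := val u == x (R u).
Lemma inX_xo k : k < b.+1 -> inX (xo k).
Proof. by move=> kb; rewrite /inX R_xo // xoE. Qed.
Lemma inXE u : inX u -> u = xo (R u).
Proof. by move=> /eqP e; apply/val_inj; rewrite xoE ?R_lt. Qed.

Definition Tl (u : 'I_n) := if inX u then (R u).+1 %% b.+1 else R u.
Definition Cl (u : 'I_n) := (R u + u %% b + 1) %% b.+1.

Lemma succm q : q < b.+1 -> q.+1 %% b.+1 = if q < b then q.+1 else 0.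
Proof.
rewrite ltnS leq_eqVlt => /orP [/eqP-> | qb]; first by rewrite ltnn modnn.
by rewrite qb modn_small.
Qed.

Lemma Cl_lt u : Cl u < b.+1. Proof. by rewrite ltn_mod. Qed.

Lemma f2_lt u : Cl u * b + u %% b < n.
Proof.
have := Cl_lt u; have := ltn_pmod u b_pos; move=> h1 h2; apply: (leq_trans _ (eq_leq (esym hn))). nia.
Qed.

Definition f2 (u : 'I_n) : 'I_n := insubd o0 (Cl u * b + u %% b).
Lemma f2E u : val (f2 u) = Cl u * b + u %% b.
Proof. by rewrite val_insubd f2_lt. Qed.
Lemma f2_div u : f2 u %/ b = Cl u.
Proof. by rewrite f2E divnMDl ?b_pos // divn_small ?addn0 // ltn_pmod ?b_pos. Qed.
Lemma f2_mod u : f2 u %% b = u %% b.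
Proof. by rewrite f2E modnMDl modn_mod. Qed.

Lemma same_Rr (u v : 'I_n) : R u = R v -> u %% b = v %% b -> u = v.
Proof. by move=> e1 e2; apply/val_inj; rewrite (u_eq u) (u_eq v) e1 e2. Qed.

Lemma Cl_inj (u v : 'I_n) : Cl u = Cl v -> u %% b = v %% b -> u = v.
Proof.
move=> e1 e2; apply: same_Rr => //.
move: e1; rewrite /Cl e2 -!addnA => /eqP; rewrite eqn_modDr.
by rewrite !modn_small ?R_lt // => /eqP.
Qed.

Lemma f2_inj : injective f2.
Proof.
move=> u v e; apply: Cl_inj; first by rewrite -f2_div e f2_div.
by rewrite -f2_mod e f2_mod.
Qed.

Definition f3 (u : 'I_n) : 'I_n := if inX u then xo ((R u).+1 %% b.+1) else u.
Lemma f3_div u : f3 u %/ b = Tl u.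
Proof.
rewrite /f3 /Tl; case: ifP => _ //.
by rewrite -/(R _) R_xo // ltn_mod.
Qed.

Lemma f3_inj : injective f3.
Proof.
have key : forall u v, inX u -> ~~ inX v -> f3 u != f3 v.
  move=> u v xu nxv; rewrite /f3 xu (negbTE nxv); apply/eqP => e.
  move/negP: nxv; apply; rewrite -e; apply: inX_xo; exact: ltn_mod.
move=> u v; case xu: (inX u); case xv: (inX v).
- rewrite /f3 xu xv => e.
  have : R (xo ((R u).+1 %% b.+1)) = R (xo ((R v).+1 %% b.+1)) by rewrite e.
  rewrite !R_xo ?ltn_mod // => /eqP; rewrite -(addn1 (R u)) -(addn1 (R v)) eqn_modDr.
  rewrite !modn_small ?R_lt // => /eqP eR.
  by rewrite (inXE xu) (inXE xv) eR.
- by move=> e; have := key u v xu; rewrite xv e eqxx => /(_ isT).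
- by move=> e; have := key v u xv; rewrite xu e eqxx => /(_ isT).
- by rewrite /f3 xu xv.
Qed.

Definition g2 : {perm 'I_n} := perm f2_inj.
Definition g3 : {perm 'I_n} := perm f3_inj.


Lemma succ_inj p q : p < b.+1 -> q < b.+1 -> p.+1 %% b.+1 = q.+1 %% b.+1 -> p = q.
Proof.
move=> hp hq /eqP; rewrite -(addn1 p) -(addn1 q) eqn_modDr !modn_small //.
by move/eqP.
Qed.

Lemma x_eq q : q < b.+1 -> x q = q * b + (if q < b then 0 else 1).
Proof.
move=> hq; rewrite /x; case: ifP => qb; rewrite ?addn0 //.
by have -> : q = b by lia.
Qed.

Definition mkpt q r : 'I_n := insubd o0 (q * b + r).
Lemma mkpt_lt q r : q < b.+1 -> r < b -> q * b + r < n.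
Proof. move=> h1 h2; apply: (leq_trans _ (eq_leq (esym hn))); nia. Qed.
Lemma mkptE q r : q < b.+1 -> r < b -> val (mkpt q r) = q * b + r.
Proof. by move=> h1 h2; rewrite val_insubd mkpt_lt. Qed.
Lemma R_mkpt q r : q < b.+1 -> r < b -> R (mkpt q r) = q.
Proof. by move=> h1 h2; rewrite /R mkptE // divnMDl ?b_pos // divn_small ?addn0. Qed.
Lemma mod_mkpt q r : q < b.+1 -> r < b -> mkpt q r %% b = r.
Proof. by move=> h1 h2; rewrite mkptE // modnMDl modn_small. Qed.
Lemma inX_mkpt q r : q < b.+1 -> r < b -> inX (mkpt q r) = (r == if q < b then 0 else 1).
Proof. by move=> h1 h2; rewrite /inX R_mkpt // mkptE // x_eq // eqn_add2l. Qed.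

Definition Phi (u v : 'I_n) := exists w, w != u /\ Tl w = Tl u /\ R w = R v.

Definition pres (L : 'I_n -> nat) (h : {perm 'I_n}) :=
  forall u v, (L u == L v) = (L (h u) == L (h v)).

Lemma pres_inv L h : pres L h -> pres L (h^-1)%g.
Proof. by move=> H u v; rewrite [RHS]H !permKV. Qed.

Lemma Phi_pres h u v : pres Tl h -> pres R h -> Phi u v -> Phi (h u) (h v).
Proof.
move=> pT pR [w [wu [e1 e2]]]; exists (h w); split; first by rewrite (inj_eq perm_inj).
by split; apply/eqP; [rewrite -pT | rewrite -pR]; apply/eqP.
Qed.

Lemma Tl_xo q : q < b.+1 -> Tl (xo q) = q.+1 %% b.+1.
Proof. by move=> hq; rewrite /Tl inX_xo // R_xo. Qed.

Lemma Phi_X q v : q < b.+1 -> inX v -> Phi (xo q) v <-> v = xo (q.+1 %% b.+1).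
Proof.
move=> hq xv; set k := q.+1 %% b.+1.
have hk : k < b.+1 by rewrite ltn_mod.
have kq : k != q.
  rewrite /k succm //; case: ifP => qb; apply/eqP; lia.
split.
- move=> [w [wne [eT eR]]].
  rewrite Tl_xo // -/k in eT.
  case xw: (inX w).
    move: eT; rewrite /Tl xw => /succ_inj.
    move=> /(_ (R_lt w) hq) ew; case/eqP: wne.
    by rewrite (inXE xw) ew.
  move: eT; rewrite /Tl xw => ek.
  by rewrite (inXE xv) -eR ek.
- move=> ->; exists (mkpt k 2).
  have h2 : 2 < b by [].
  rewrite Tl_xo // R_xo // /Tl inX_mkpt // R_mkpt //.
  have -> : (2 == if k < b then 0 else 1) = false by case: (k < b).
  split => //.
  apply/eqP => /(congr1 R); rewrite R_mkpt // R_xo //; exact/eqP.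
Qed.

Lemma X_notPhi u : inX u -> ~ Phi u u.
Proof.
move=> xu; rewrite {1}(inXE xu) => /(Phi_X (R_lt u) xu) e.
have := congr1 R e; rewrite !R_xo ?ltn_mod ?R_lt // => e'.
have := succm (R_lt u); rewrite -e'; case: ifP => qb ?; lia.
Qed.

Lemma notX_Phi u : ~~ inX u -> Phi u u.
Proof.
move=> nxu; set q := R u; set r := u %% b.
set r' := if r == 2 then (if q < b then 1 else 0) else 2.
have hq : q < b.+1 by apply: R_lt.
have hr : r < b by apply: ltn_pmod b_pos.
have hr' : r' < b by rewrite /r'; case: ifP => _; [case: ifP => _|]; apply: leq_trans hb.
exists (mkpt q r'); split.
  apply/eqP => /(congr1 (fun w : 'I_n => w %% b)); rewrite mod_mkpt // -/r /r'.
  case: (r =P 2) => [-> | r2]; first by case: ifP.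
  by move=> e; apply: r2; rewrite -e.
rewrite R_mkpt //; split => //.
rewrite /Tl (negbTE nxu) inX_mkpt // R_mkpt //.
have -> : (r' == if q < b then 0 else 1) = false by rewrite /r'; case: (r == 2); case: (q < b).
done.
Qed.

Lemma Cl_xo k : k < b.+1 -> Cl (xo k) = if k < b then k.+1 else 1.
Proof.
move=> hk; rewrite /Cl R_xo // /xo.
have -> : insubd o0 (x k) %% b = x k %% b by rewrite xoE.
rewrite x_mod; case: ifP => kb; first by rewrite addn0 addn1 modn_small.
have -> : k = b by lia.
have -> : b + 1 + 1 = 1 + b.+1 by lia.
rewrite modnDr. rewrite modn_small //. lia.
Qed.

Lemma rigid (h : {perm 'I_n}) : pres R h -> pres Cl h -> pres Tl h -> h = 1%g.
Proof.
move=> pR pC pT.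
have pR' := pres_inv pR; have pT' := pres_inv pT.
have hX u : inX u -> inX (h u).
  move=> xu; apply/negPn/negP => /notX_Phi Ph.
  have := Phi_pres pT' pR' Ph; rewrite permK; exact: X_notPhi.
have hb1 : b < b.+1 by [].
have h0 : h (xo 0) = xo 0.
  set y := h (xo 0); set z := h (xo b).
  have xy : inX y by apply: hX; apply: inX_xo.
  have xz : inX z by apply: hX; apply: inX_xo.
  have cyz : Cl y = Cl z.
    apply/eqP; rewrite -pC Cl_xo // Cl_xo // ltnn.
    by rewrite (leq_trans _ hb).
  have yz : R y != R z.
    apply/eqP => e; have : y = z by rewrite (inXE xy) (inXE xz) e.
    move/perm_inj/(congr1 R); rewrite !R_xo //; lia.
  move: cyz; rewrite (inXE xy) (inXE xz) !Cl_xo ?R_lt //.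
  case: ifP => ry; case: ifP => rz.
  - by move=> [] /eqP; rewrite (negbTE yz).
  - by case=> ry0; rewrite ry0.
  - move=> ez.
    have ey : R y = b by move: (R_lt y); lia.
    have ez0 : R z = 0 by lia.
    have Pb : Phi (xo b) (xo 0) by apply/Phi_X => //; [apply: inX_xo | rewrite modnn].
    have := Phi_pres pT pR Pb; rewrite -/y -/z (inXE xy) (inXE xz) ey ez0.
    move/Phi_X => /(_ (ltn0Sn _) (inX_xo hb1)) /(congr1 R).
    rewrite !R_xo ?ltn_mod // modn_small; last lia.
    by move=> b1; exfalso; lia.
  - move: (R_lt y) (R_lt z) ry rz yz; lia.
have hall : forall q, q < b.+1 -> h (xo q) = xo q.
  elim=> [//| q IH hq].
  have hq' : q < b.+1 by apply: ltnW.
  have P : Phi (xo q) (xo q.+1) by apply/Phi_X => //; [apply: inX_xo | rewrite modn_small].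
  have := Phi_pres pT pR P; rewrite IH //.
  by move/Phi_X => /(_ hq' (hX _ (inX_xo hq))); rewrite modn_small.
apply/permP => u; rewrite perm1.
have eR : R (h u) = R u.
  have := pR u (xo (R u)); rewrite hall ?R_lt // R_xo ?R_lt // eqxx.
  by move/esym/eqP.
have colc : forall w c, 0 < c < b.+1 -> (Cl w == c) = (Cl (h w) == c).
  move=> w c /andP [c0 cb].
  have hc : c.-1 < b.+1 by lia.
  have := pC w (xo c.-1); rewrite hall // Cl_xo //.
  have -> : c.-1 < b by lia.
  by rewrite prednK.
have eC : Cl (h u) = Cl u.
  case: (posnP (Cl u)) => c0.
    case: (posnP (Cl (h u))) => c1; first by rewrite c0 c1.
    have := colc u (Cl (h u)); rewrite c1 Cl_lt eqxx c0 => /(_ isT).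
    by move=> /esym /eqP; lia.
  by have := colc u (Cl u); rewrite c0 Cl_lt eqxx => /(_ isT) /esym /eqP.
apply: same_Rr => //.
move: eC; rewrite /Cl eR -!addnA => /eqP; rewrite eqn_modDl addn1 addn1.
move=> /eqP /succ_inj; apply; apply: leq_trans (ltn_pmod _ b_pos) _; done.
Qed.


Lemma upper_main (h : {perm 'I_n}) :
  (forall u v : 'I_n, (u %/ b == v %/ b) = (h u %/ b == h v %/ b)) ->
  (forall u v : 'I_n, (g2 u %/ b == g2 v %/ b) = (g2 (h u) %/ b == g2 (h v) %/ b)) ->
  (forall u v : 'I_n, (g3 u %/ b == g3 v %/ b) = (g3 (h u) %/ b == g3 (h v) %/ b)) ->
  h = 1%g.
Proof.
move=> p1 p2 p3; apply: rigid => // u v.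
  by have := p2 u v; rewrite !permE !f2_div.
by have := p3 u v; rewrite !permE !f3_div.
Qed.

Lemma g_neq : [/\ g2 != 1%g, g3 != 1%g & g2 != g3].
Proof.
have o0x : inX o0 by rewrite /inX /R /= div0n /x b_pos.
have hb1 : b < b.+1 by [].
split; apply/eqP.
- move=> /permP /(_ o0) /(congr1 (fun w : 'I_n => w %/ b)).
  rewrite permE perm1 f2_div /Cl /R /= div0n mod0n modn_small; lia.
- move=> /permP /(_ o0) /(congr1 (fun w : 'I_n => w %/ b)).
  rewrite permE perm1 f3_div /Tl o0x /R /= div0n modn_small; lia.
- move=> /permP /(_ (xo b)) /(congr1 (fun w : 'I_n => w %/ b)).
  by rewrite !permE f2_div f3_div Cl_xo // Tl_xo // ltnn modnn.
Qed.

End Upper.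

Section Lower.
Variables (b n : nat).
Hypotheses (hb : 0 < b) (hn : n = (b.+1 * b)%N).

Lemma ln_pos : 0 < n. Proof. by rewrite hn muln_gt0 hb. Qed.
Definition lo0 : 'I_n := Ordinal ln_pos.

Lemma ldiv_lt (u : 'I_n) : u %/ b < b.+1. Proof. by rewrite ltn_divLR // -hn. Qed.

Definition lab (p : {perm 'I_n}) (u : 'I_n) : 'I_b.+1 := inord (p u %/ b).
Lemma labE p u : nat_of_ord (lab p u) = p u %/ b.
Proof. by rewrite inordK // ldiv_lt. Qed.

Definition lpt (r : nat) (j : 'I_b) : 'I_n := insubd lo0 (r * b + j).
Lemma lpt_lt (r : 'I_b.+1) (j : 'I_b) : r * b + j < n.
Proof.
have := ltn_ord r; have := ltn_ord j => h1 h2.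
apply: (leq_trans _ (eq_leq (esym hn))); nia.
Qed.

Lemma card_blk (r : 'I_b.+1) : #|[set u : 'I_n | u %/ b == r]| = b.
Proof.
have -> : [set u : 'I_n | u %/ b == r] = [set lpt r j | j : 'I_b].
  apply/setP => u; rewrite inE; apply/eqP/imsetP => [e | [j _ ->]].
    exists (Ordinal (ltn_pmod u hb)) => //; apply/val_inj.
    by rewrite /lpt val_insubd lpt_lt /= -e -divn_eq.
  by rewrite /lpt val_insubd lpt_lt divnMDl // divn_small ?addn0.
rewrite card_imset ?card_ord // => j1 j2.
move/(congr1 val); rewrite /lpt !val_insubd !lpt_lt => /eqP.
by rewrite eqn_add2l => /eqP /val_inj.
Qed.

Lemma card_fib p (r : 'I_b.+1) : #|[set u | lab p u == r]| = b.
Proof.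
transitivity #|[set u : 'I_n | u %/ b == r]|; last exact: card_blk.
rewrite -[RHS](card_preimset _ (@perm_inj _ p)).
by apply: eq_card => u; rewrite !inE -val_eqE /= labE.
Qed.

Definition present (K1 K2 : 'I_n -> 'I_b.+1) r c :=
  [exists u, (K1 u == r) && (K2 u == c)].

Lemma miss (K1 K2 : 'I_n -> 'I_b.+1) :
  (forall r, #|[set u | K1 u == r]| = b) ->
  (forall u v, K1 u = K1 v -> K2 u = K2 v -> u = v) ->
  forall r, exists c, forall c', present K1 K2 r c' = (c' != c).
Proof.
move=> hcard hinj r; set F := [set u | K1 u == r].
have cI : #|K2 @: F| = b.
  rewrite card_in_imset ?hcard // => u v; rewrite !inE => /eqP u1 /eqP v1.
  by apply: hinj; rewrite u1 v1.
have : #|~: (K2 @: F)| == 1 by rewrite cardsCs setCK card_ord cI subSnn.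
move=> /cards1P [c Ec]; exists c => c'.
have -> : (c' != c) = (c' \in K2 @: F) by rewrite -[_ @: F]setCK Ec !inE.
apply/existsP/imsetP => [[u /andP [/eqP e1 /eqP e2]] | [u]].
  by exists u; rewrite ?inE ?e1.
by rewrite inE => e1 e2; exists u; rewrite e1 e2 eqxx.
Qed.

Lemma lower (p1 p2 : {perm 'I_n}) : exists z : {perm 'I_n}, z != 1%g /\
  (forall u v, (p1 u %/ b == p1 v %/ b) = (p1 (z u) %/ b == p1 (z v) %/ b)) /\
  (forall u v, (p2 u %/ b == p2 v %/ b) = (p2 (z u) %/ b == p2 (z v) %/ b)).
Proof.
set L1 := lab p1; set L2 := lab p2.
suff [z [z1 [h1 h2]]] : exists z : {perm 'I_n}, z != 1%g /\
  (forall u v, (L1 u == L1 v) = (L1 (z u) == L1 (z v))) /\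
  (forall u v, (L2 u == L2 v) = (L2 (z u) == L2 (z v))).
  exists z; split => //; split => u v; rewrite -!labE !val_eqE; [exact: h1|exact: h2].
case: (boolP [exists u, exists v, [&& u != v, L1 u == L1 v & L2 u == L2 v]]).
  move=> /existsP [u /existsP [v /and3P [uv /eqP e1 /eqP e2]]].
  exists (tperm u v); split.
    apply/eqP => /permP /(_ u); rewrite perm1 tpermL => /eqP.
    by rewrite eq_sym (negbTE uv).
  have fix_ (L : 'I_n -> 'I_b.+1) : L u = L v -> forall w, L (tperm u v w) = L w.
    by move=> e w; case: tpermP => // ->.
  by split => u' v'; rewrite !fix_.
move=> /existsPn H.
have inj : forall u v, L1 u = L1 v -> L2 u = L2 v -> u = v.
  move=> u v e1 e2; apply/eqP; apply/negPn/negP => uv.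
  by have := H u => /existsPn /(_ v); rewrite uv e1 e2 !eqxx.
have mr r : exists c, [forall c', present L1 L2 r c' == (c' != c)].
  have [c Hc] := miss (card_fib p1) inj r.
  by exists c; apply/forallP => c'; rewrite Hc.
have mc c : exists r, forall r', present L2 L1 c r' = (r' != r).
  by apply: (miss (card_fib p2)) => u v e2 e1; apply: inj.
have presC r c : present L2 L1 c r = present L1 L2 r c.
  by apply: eq_existsb => u; rewrite andbC.
pose m_ r := xchoose (mr r).
have mP r c : present L1 L2 r c = (c != m_ r).
  by have := xchooseP (mr r); move=> /forallP /(_ c) /eqP.
have m_inj : injective m_.
  move=> r1 r2 e; have [r0 Hr0] := mc (m_ r1).
  have := Hr0 r1; rewrite presC mP eqxx => /esym /negbFE /eqP ->.
  by have := Hr0 r2; rewrite presC mP e eqxx => /esym /negbFE /eqP ->.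
set r0 : 'I_b.+1 := ord0; set r1 : 'I_b.+1 := inord 1.
have r01 : r0 != r1 by rewrite -val_eqE /= inordK // ltnS.
pose al := tperm r0 r1; pose be := tperm (m_ r0) (m_ r1).
have key r c : present L1 L2 (al r) (be c) = present L1 L2 r c.
  rewrite !mP.
  have -> : m_ (al r) = be (m_ r).
    rewrite /al /be; case: tpermP => [-> | -> |]; rewrite ?tpermL ?tpermR //.
    by move=> /eqP nr0 /eqP nr1; rewrite tpermD // (inj_eq m_inj) eq_sym.
  by rewrite (inj_eq perm_inj).
pose zf u := odflt u [pick v | (L1 v == al (L1 u)) && (L2 v == be (L2 u))].
have zspec u : L1 (zf u) = al (L1 u) /\ L2 (zf u) = be (L2 u).
  rewrite /zf; case: pickP => [v /andP [/eqP -> /eqP ->] // | none].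
  have : present L1 L2 (al (L1 u)) (be (L2 u)).
    by rewrite key; apply/existsP; exists u; rewrite !eqxx.
  by move=> /existsP [v]; rewrite none.
have zK : cancel zf zf.
  move=> u; have [a1 a2] := zspec (zf u); have [b1 b2] := zspec u.
  by apply: inj; rewrite ?a1 ?a2 ?b1 ?b2 tpermK.
exists (perm (can_inj zK)); split; last first.
  split => u v; rewrite !permE; have [a1 a2] := zspec u; have [b1 b2] := zspec v.
    by rewrite a1 b1 (inj_eq perm_inj).
  by rewrite a2 b2 (inj_eq perm_inj).
have : present L1 L2 r0 (if m_ r0 == r0 then r1 else r0).
  rewrite mP; case: (m_ r0 =P r0) => [-> | /eqP ne]; first by rewrite eq_sym.
  by rewrite eq_sym.
move=> /existsP [u /andP [/eqP u0 _]].
apply/eqP => /permP /(_ u); rewrite permE perm1 => e.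
have [a1 _] := zspec u; move: a1; rewrite e u0 /al tpermL => /eqP.
by rewrite (negbTE r01).
Qed.

End Lower.

Lemma two_sub (T : finType) (A : {set T}) (x0 : T) :
  #|A| <= 2 -> exists y1 y2, A \subset [set y1; y2].
Proof.
move=> hA; case: (set_0Vmem A) => [-> | [y1 h1]].
  by exists x0, x0; apply: sub0set.
case: (set_0Vmem (A :\ y1)) => [E | [y2 h2]].
  exists y1, y1; apply/subsetP => y yA; rewrite !inE.
  case: (y =P y1) => // ne; have : y \in A :\ y1 by apply/setD1P; split => //; apply/eqP.
  by rewrite E inE.
exists y1, y2; apply/subsetP => y yA; rewrite !inE.
case: (y =P y1) => //= ne1; case: (y =P y2) => //= ne2.
have E : A :\ y1 :\ y2 = set0.
  apply: cards0_eq; move: hA; rewrite (cardsD1 y1) h1 (cardsD1 y2 (A :\ y1)) h2.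
  by rewrite !add1n ltnS ltnS leqn0 => /eqP.
have : y \in A :\ y1 :\ y2.
  by apply/setD1P; split; [apply/eqP | apply/setD1P; split => //; apply/eqP].
by rewrite E inE.
Qed.

Theorem proposition2p5 (n a b : nat) :
  n = (a * b)%N -> a = b.+1 -> 3 <= b ->
  let G := [set: {perm 'I_n}] in
  let H := partition_stab (std_partition n a b) in
  (exists S : {set {perm 'I_n}}, is_base_set G H S /\ #|S| = 3) /\
  (forall S : {set {perm 'I_n}}, is_base_set G H S -> 3 <= #|S|).
Proof.
move=> hn ha hb G H; subst a.
have hb0 : 0 < b by apply: leq_trans hb.
have H1 g : (1%g : {perm 'I_n}) \in (H :^ g)%g.
  by apply/(conjP hn hb0) => u v; rewrite !perm1.
have triv (X : {set {perm 'I_n}}) : 1%g \in X -> (g2 hb hn)^-1%g \in X ->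
    (g3 hb hn)^-1%g \in X -> \bigcap_(g in X) (H :^ g)%g = [set 1%g].
  move=> X1 X2 X3.
  apply/setP => z; rewrite inE; apply/bigcapP/eqP => [Hz | ->]; last first.
    by move=> g _; exact: H1.
  apply: (upper_main (hb:=hb) (hn:=hn)).
  - move=> u v; have := Hz _ X1 => /(conjP hn hb0) /(_ u v).
    by rewrite invg1 !perm1.
  - by have := Hz _ X2 => /(conjP hn hb0); rewrite invgK.
  - by have := Hz _ X3 => /(conjP hn hb0); rewrite invgK.
have core1 : core G H = [set 1%g] by apply: triv; rewrite inE.
split.
- exists [set 1%g; (g2 hb hn)^-1%g; (g3 hb hn)^-1%g]; split.
    split; first exact: subsetT.
    by rewrite core1; apply: triv; rewrite !inE eqxx ?orbT.
  have [n2 n3 n23] := g_neq hb hn.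
  rewrite setUC !cardsU1 cards1 !inE.
  have e3 : ((g3 hb hn)^-1 == 1)%g = false.
    by apply/eqP => /(congr1 invg); rewrite invgK invg1 => /eqP; rewrite (negbTE n3).
  have e2 : (1 == (g2 hb hn)^-1)%g = false.
    by apply/eqP => /(congr1 invg); rewrite invgK invg1 => /esym /eqP; rewrite (negbTE n2).
  have e23 : ((g3 hb hn)^-1 == (g2 hb hn)^-1)%g = false.
    by apply/eqP => /(congr1 invg); rewrite !invgK => /esym /eqP; rewrite (negbTE n23).
  by rewrite e3 e2 e23.
- move=> S [_ ES]; rewrite leqNgt; apply/negP => small.
  have [y1 [y2 sub]] := two_sub 1%g small.
  have [z [z1 [p1 p2]]] := lower hb0 hn (y1^-1)%g (y2^-1)%g.
  have zin : z \in \bigcap_(g in S) (H :^ g)%g.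
    apply/bigcapP => g gS; move/subsetP: sub => /(_ g gS); rewrite !inE.
    by case/orP => /eqP ->; apply/(conjP hn hb0).
  by move: zin; rewrite ES core1 inE (negbTE z1).
Qed.
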